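(* Let $\nabla$ be a finite undirected graph (loops allowed) and $X\in\mathbb{L}(\nabla)$. If $Y_0\subsetneq Y_1\subsetneq\cdots\subsetneq Y_n=X$ is a chain of elements of $\mathbb{L}(\nabla)$, then $n$ is at most the number of equilocality classes contained in $X$ that consist of essential vertices.
   Context: For a graph $\nabla$ with vertex set $V$: $\nabla(x)$ is the set of vertices adjacent to $x$, $\nabla(X)=\bigcap_{x\in X}\nabla(x)$ (with $\nabla(\emptyset)=V$), and $\mathbb{L}(\nabla)=\{X\subseteq V:\nabla(\nabla(X))=X\}$ ordered by inclusion. Two vertices $x,y$ are equilocal if $\nabla(x)=\nabla(y)$; equivalence classes are equilocality classes, and each element of $\mathbb{L}(\nabla)$ is a union of them. An element $a$ of a lattice is (completely) meet-irreducible if $a=\bigwedge A$ for a subset $A$ implies $a\in A$; a vertex $x$ is essential if $\nabla(x)$ is meet-irreducible in $\mathbb{L}(\nabla)$ (equilocal vertices are either all essential or all not). *)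

(* Defs.v *)
From mathcomp Require Import all_boot.
Set Implicit Arguments. Unset Strict Implicit. Unset Printing Implicit Defensive.

(* A finite undirected graph (loops allowed) on a finType T is a symmetric
   relation e : rel T (no irreflexivity required). *)

Section Locality.
Variables (T : finType) (e : rel T).

Definition nbv (x : T) : {set T} := [set y | e x y].

(* nabla(X) = \bigcap_{x in X} nabla(x), with nabla(set0) = V *)
Definition nbs (X : {set T}) : {set T} := \bigcap_(x in X) nbv x.

Definition Lat : {set {set T}} := [set X : {set T} | nbs (nbs X) == X].

Definition is_meet_in_L (A : {set {set T}}) (a : {set T}) : bool :=
  [&& a \in Lat,
      [forall b in A, a \subset b] &
      [forall b in Lat, [forall c in A, b \subset c] ==> (b \subset a)]].

(* a is (completely) meet-irreducible in L(nabla): whenever a = /\ A for a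
   subset A of L(nabla), a belongs to A *)
Definition meet_irreducible (a : {set T}) : bool :=
  [forall A : {set {set T}}, (A \subset Lat) ==> is_meet_in_L A a ==> (a \in A)].

Definition essential (x : T) : bool := meet_irreducible (nbv x).

Definition eqloc_class (x : T) : {set T} := [set y | nbv y == nbv x].

Definition essential_classes_in (X : {set T}) : {set {set T}} :=
  [set C : {set T} | [exists x, [&& C == eqloc_class x, C \subset X &
                                   [forall y in C, essential y]]]].

End Locality.

(* Main.v *)
Require Import Defs.
From mathcomp Require Import all_boot.

Section Aux.
Variables (T : finType) (e : rel T) (e_sym : symmetric e).

Definition cl (x : T) := nbs e (nbv e x).

Lemma nbsP (S : {set T}) y : reflect (forall x, x \in S -> e x y) (y \in nbs e S).
Proof.
apply: (iffP bigcapP) => H x Hx; first by move: (H x Hx); rewrite inE.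
by rewrite inE; apply: H.
Qed.

Lemma nbs_anti {S S' : {set T}} : S \subset S' -> nbs e S' \subset nbs e S.
Proof.
move=> sub; apply/subsetP => y /nbsP H; apply/nbsP => x Hx.
exact: H x (subsetP sub x Hx).
Qed.

Lemma nbs_ext (S : {set T}) : S \subset nbs e (nbs e S).
Proof.
apply/subsetP => x Hx; apply/nbsP => y /nbsP H; rewrite e_sym; exact: H x Hx.
Qed.

Lemma nbs3 (S : {set T}) : nbs e (nbs e (nbs e S)) = nbs e S.
Proof.
apply/eqP; rewrite eqEsubset; apply/andP; split.
  exact: nbs_anti (nbs_ext S).
exact: nbs_ext.
Qed.

Lemma LatE (Z : {set T}) : (Z \in Lat e) = (nbs e (nbs e Z) == Z).
Proof. by rewrite inE. Qed.

Lemma nbs_Lat (S : {set T}) : nbs e S \in Lat e.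
Proof. by rewrite LatE nbs3. Qed.

Lemma nbv1 x : nbs e [set x] = nbv e x.
Proof. by rewrite /nbs big_set1. Qed.

Lemma in_cl x : x \in cl x.
Proof. by apply/nbsP => y; rewrite inE => exy; rewrite e_sym. Qed.

Lemma cl_sub {x} {Z : {set T}} : Z \in Lat e -> x \in Z -> cl x \subset Z.
Proof.
rewrite LatE => /eqP HZ xZ; rewrite -HZ /cl -nbv1.
by apply: nbs_anti; apply: nbs_anti; rewrite sub1set.
Qed.

Lemma ess_min (Y0 Y1 : {set T}) x : Y0 \in Lat e -> Y1 \in Lat e ->
  x \in Y1 -> x \notin Y0 ->
  (forall w, w \in Y1 -> w \notin Y0 -> #|cl x| <= #|cl w|) -> essential e x.
Proof.
move=> L0 L1 xY1 xY0 Hmin.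
rewrite /essential /meet_irreducible; apply/forallP => A; apply/implyP => AL.
apply/implyP => /and3P [_ /forall_inP Hlow /forall_inP Hglb].
apply/negPn/negP => nA.
have Hsub : forall a, a \in A -> nbs e a \subset Y0.
  move=> a aA; apply/subsetP => w wa; apply/negPn/negP => wY0.
  have aL : a \in Lat e := subsetP AL a aA.
  have xa : nbv e x \subset a := Hlow a aA.
  have nacl : nbs e a \subset cl x := nbs_anti xa.
  have clx1 : cl x \subset Y1 := cl_sub L1 xY1.
  have wY1 : w \in Y1 by apply: (subsetP clx1); apply: (subsetP nacl).
  have clw : cl w \subset nbs e a := cl_sub (nbs_Lat a) wa.
  have : nbs e a == cl x.
    rewrite eqEcard nacl /=.
    apply: leq_trans (Hmin w wY1 wY0) (subset_leq_card clw).
  move/eqP => Heq.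
  move: aL; rewrite LatE Heq /cl -nbv1 nbs3 nbv1 => /eqP Ha.
  by move: nA; rewrite Ha aA.
have H1 : nbs e Y0 \subset nbv e x.
  apply: (implyP (Hglb _ (nbs_Lat Y0))).
  apply/forall_inP => c cA.
  have := subsetP AL c cA; rewrite LatE => /eqP <-.
  exact: nbs_anti (Hsub c cA).
have : cl x \subset Y0.
  move: L0; rewrite LatE => /eqP <-; exact: nbs_anti H1.
by move/subsetP/(_ x (in_cl x)); rewrite (negbTE xY0).
Qed.

End Aux.

Theorem mainTheorem20 (T : finType) (e : rel T) (e_sym : symmetric e)
  (X : {set T}) (HX : X \in Lat e)
  (n : nat) (Y : nat -> {set T})
  (HYL : forall i, i <= n -> Y i \in Lat e)
  (HYch : forall i, i < n -> Y i \proper Y i.+1)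
  (HYn : Y n = X) :
  n <= #|essential_classes_in e X|.
Proof.
have chain : forall i j, i <= j -> j <= n -> Y i \subset Y j.
  move=> i j; elim: j => [|j IH] ij jn.
    by rewrite leqn0 in ij; rewrite (eqP ij).
  rewrite leq_eqVlt in ij; case/orP: ij => [/eqP->|lt]; first exact: subxx.
  exact: subset_trans (IH lt (ltnW jn)) (proper_sub (HYch j jn)).
have Hex : forall i, i < n ->
    exists x, [&& x \in Y i.+1, x \notin Y i & essential e x].
  move=> i lt; have [_ [x0 x0in x0out]] := properP (HYch i lt).
  pose P := [pred w | (w \in Y i.+1) && (w \notin Y i)].
  have P0 : P x0 by rewrite /= x0in x0out.
  case: (arg_minnP (fun w => #|@cl T e w|) P0) => x /andP [xin xout] Hm.
  exists x; rewrite xin xout /=.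
  apply: (@ess_min T e e_sym _ _ _ (HYL i (ltnW lt)) (HYL i.+1 lt) xin xout).
  by move=> w win wout; apply: Hm; rewrite /= win wout.
pose f (i : 'I_n) := xchoose (Hex i (ltn_ord i)).
have fP : forall i : 'I_n,
    [&& f i \in Y i.+1, f i \notin Y i & essential e (f i)].
  move=> i; exact: (xchooseP (Hex i (ltn_ord i))).
pose g (i : 'I_n) := eqloc_class e (f i).
have Neq : forall i j : 'I_n, i < j -> g i != g j.
  move=> i j ij; apply/eqP => Hg.
  have : f j \in g i by rewrite Hg inE.
  rewrite inE => /eqP Hnb.
  have /and3P [fiin _ _] := fP i.
  have /and3P [_ fjout _] := fP j.
  have clsub : @cl T e (f i) \subset Y j.
    have h1 := @cl_sub T e _ _ (HYL i.+1 (ltn_ord i)) fiin.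
    apply: subset_trans h1 _.
    exact: chain ij (ltnW (ltn_ord j)).
  have : f j \in @cl T e (f i) by rewrite /cl -Hnb; apply: in_cl.
  by move/(subsetP clsub); rewrite (negbTE fjout).
have ginj : injective g.
  move=> i j Hg; apply: ord_inj.
  case: (ltngtP i j) => [lt|lt|//].
    by have := Neq i j lt; rewrite Hg eqxx.
  by have := Neq j i lt; rewrite Hg eqxx.
have -> : n = #|[set g i | i in 'I_n]| by rewrite card_imset // card_ord.
apply: subset_leq_card; apply/subsetP => C /imsetP [i _ ->].
have /and3P [fiin _ fiess] := fP i.
rewrite inE; apply/existsP; exists (f i); rewrite eqxx /=; apply/andP; split.
  apply/subsetP => y; rewrite inE => /eqP Hy.
  have yin : y \in @cl T e (f i) by rewrite /cl -Hy; apply: in_cl.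
  have := subsetP (@cl_sub T e _ _ (HYL i.+1 (ltn_ord i)) fiin) y yin.
  by rewrite -HYn; apply: (subsetP (chain i.+1 n (ltn_ord i) (leqnn n))).
apply/forall_inP => y; rewrite inE => /eqP Hy.
by rewrite /essential Hy.
Qed.
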